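(* Let $I\subset\mathbb{R}$ be an interval and let $M,N\colon I^2\to I$ be continuous means such that $(M,N)$ is weakly contractive. Then there exists a unique mean $K\colon I^2\to I$ which is $(M,N)$-invariant, and the sequence of iterates $\big((M,N)^n\big)_{n\in\mathbb{N}}$ converges to $(K,K)$ uniformly on compact subsets of $I^2$.
   Context: A function $K\colon I^2\to\mathbb{R}$ is a mean in $I$ if $\min(x,y)\le K(x,y)\le\max(x,y)$ for all $x,y\in I$. $(M_n,N_n):=(M,N)^n$ denotes the $n$-th iterate of the map $(x,y)\mapsto(M(x,y),N(x,y))$. $(M,N)$ is weakly contractive if for all $x,y\in I$ with $x\ne y$ there exists a positive integer $n$ with $|M_n(x,y)-N_n(x,y)|<|x-y|$. A mean $K$ is $(M,N)$-invariant if $K(M(x,y),N(x,y))=K(x,y)$ for all $x,y\in I$. *)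

(* Defs.v *)
From HB Require Import structures.
From mathcomp Require Import all_boot all_order all_algebra.
From mathcomp Require Import all_classical all_reals all_analysis.
Set Implicit Arguments. Unset Strict Implicit. Unset Printing Implicit Defensive.
Import Order.TTheory GRing.Theory Num.Theory.
Import numFieldNormedType.Exports.
Local Open Scope classical_set_scope.
Local Open Scope ring_scope.

Section Defs.
Variable R : realType.

(* "I is an interval" is the library's num_normedtype.is_interval (convexity). *)

Definition square (I : set R) : set (R * R) := [set p | I p.1 /\ I p.2].

Definition is_mean (I : set R) (K : R -> R -> R) : Prop :=
  forall x y, I x -> I y ->
    Order.min x y <= K x y /\ K x y <= Order.max x y.

Definition MN_iter (M N : R -> R -> R) (n : nat) (p : R * R) : R * R :=
  iter n (fun q : R * R => (M q.1 q.2, N q.1 q.2)) p.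

Definition weakly_contractive (I : set R) (M N : R -> R -> R) : Prop :=
  forall x y, I x -> I y -> x != y ->
    exists n : nat, (0 < n)%N /\
      `|(MN_iter M N n (x, y)).1 - (MN_iter M N n (x, y)).2| < `|x - y|.

Definition is_invariant (I : set R) (M N K : R -> R -> R) : Prop :=
  forall x y, I x -> I y -> K (M x y) (N x y) = K x y.

Definition continuous_on_square (I : set R) (M : R -> R -> R) : Prop :=
  {within square I, continuous (fun p : R * R => M p.1 p.2)}.

Definition unif_cvg_on (C : set (R * R)) (M N K : R -> R -> R) : Prop :=
  forall eps : R, 0 < eps -> exists n0 : nat, forall n : nat, (n0 <= n)%N ->
    forall p, C p ->
      `|(MN_iter M N n p).1 - K p.1 p.2| < eps /\
      `|(MN_iter M N n p).2 - K p.1 p.2| < eps.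
End Defs.

(* Main.v *)
Require Import Defs.
From HB Require Import structures.
From mathcomp Require Import all_boot all_order all_algebra.
From mathcomp Require Import all_classical all_reals all_analysis.
From mathcomp Require Import lra.
Import Order.TTheory GRing.Theory Num.Theory.
Import numFieldNormedType.Exports.
Local Open Scope classical_set_scope.
Local Open Scope ring_scope.

Lemma cont_ed {R : realType} {I : set R} {M : R -> R -> R} :
  continuous_on_square I M -> forall {q}, square I q ->
  forall {e : R}, 0 < e -> exists2 d : R, 0 < d & forall t, square I t ->
   `|t.1 - q.1| < d -> `|t.2 - q.2| < d -> `|M t.1 t.2 - M q.1 q.2| < e.
Proof.
move=> H q Hq e e0.
have := (subspace_continuousP _ _).1 H q Hq.
move/cvgrPdist_lt => /(_ e e0).
rewrite /within /= => /nbhs_ballP [d d0 Hd].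
exists d => // t Ht h1 h2.
rewrite distrC.
apply: (Hd t) => //.
split => /=; rewrite /ball /= distrC //.
Qed.

Lemma dini_cover {R : realType} (C : set (R * R)) (P : nat -> R * R -> Prop) :
  compact C ->
  (forall x, C x -> exists n0 : nat, exists2 d : R, 0 < d & forall y,
     `|y.1 - x.1| < d -> `|y.2 - x.2| < d -> forall n, (n0 <= n)%N -> P n y) ->
  exists N : nat, forall n, (N <= n)%N -> forall y, C y -> P n y.
Proof.
move=> /compact_near_coveringP cC H.
have : \forall n \near \oo, C `<=` P n.
  apply: (cC nat \oo P) => x Cx.
  have [n0 [d d0 Hd]] := H x Cx.
  exists (ball x d, [set n | (n0 <= n)%N]).
    split => /=; first by apply/nbhs_ballP; exists d.
    by exists n0.
  case=> y n /= [[b1 b2] hn].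
  apply: Hd => //; rewrite distrC; [exact: b1|exact: b2].
case=> N _ HN; exists N => n hn y Cy; exact: HN.
Qed.

Lemma mm {R : realType} (x y : R) :
  (Order.min x y = x /\ Order.max x y = y /\ x <= y) \/
  (Order.min x y = y /\ Order.max x y = x /\ y <= x).
Proof.
case: (lerP x y) => h; [left | right]; do ?split => //; exact: ltW.
Qed.

Lemma nlt {R : realType} (x e : R) : `|x| < e -> - e < x /\ x < e.
Proof. by rewrite ltr_norml => /andP[a b]. Qed.

Lemma nltI {R : realType} (x e : R) : - e < x -> x < e -> `|x| < e.
Proof. by move=> a b; rewrite ltr_norml a b. Qed.

Lemma nge {R : realType} (x : R) : x <= `|x| /\ - x <= `|x|.
Proof. by split; [exact: ler_norm | rewrite -normrN; exact: ler_norm]. Qed.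

Lemma tri {R : realType} (u v u0 v0 : R) :
  `|u - v| <= `|u0 - v0| + `|u - u0| + `|v - v0|.
Proof.
have [a1 a2] := nge (u0 - v0); have [b1 b2] := nge (u - u0);
have [c1 c2] := nge (v - v0).
rewrite ler_norml; apply/andP; split; lra.
Qed.

Lemma eq_close {R : realType} (u v : R) :
  (forall e, 0 < e -> `|u - v| < e) -> u = v.
Proof.
move=> H; apply/eqP; rewrite -subr_eq0 -normr_eq0.
have [h|h] := eqVneq `|u - v| 0 => //.
have hp : 0 < `|u - v| by rewrite normr_gt0 -normr_eq0.
by have := H _ hp; rewrite ltxx.
Qed.

Section Main.
Variables (R : realType) (I : set R) (M N : R -> R -> R).
Hypotheses (HI : is_interval I) (HM : is_mean I M) (HN : is_mean I N)
  (cM : continuous_on_square I M) (cN : continuous_on_square I N)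
  (wc : weakly_contractive I M N).

Local Notation it := (MN_iter M N).
Local Notation lo q := (Order.min q.1 q.2).
Local Notation hi q := (Order.max q.1 q.2).

Lemma itS n p : it n.+1 p = (M (it n p).1 (it n p).2, N (it n p).1 (it n p).2).
Proof. by []. Qed.

Lemma itD n m p : it (n + m) p = it n (it m p).
Proof. exact: iterD. Qed.

Lemma it0 p : it 0 p = p.
Proof. by []. Qed.

Lemma inI {x y z} : I x -> I y -> Order.min x y <= z -> z <= Order.max x y -> I z.
Proof.
move=> Ix Iy h1 h2.
case: (mm x y) => [[e1 [e2 _]]|[e1 [e2 _]]]; rewrite e1 e2 in h1 h2.
  by apply: (HI x y) => //; rewrite h1 h2.
by apply: (HI y x) => //; rewrite h1 h2.
Qed.

Lemma sqF q : square I q -> square I (M q.1 q.2, N q.1 q.2).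
Proof.
case=> h1 h2; have [a b] := HM _ _ h1 h2; have [c d] := HN _ _ h1 h2.
split => /=; [exact: (inI h1 h2 a b) | exact: (inI h1 h2 c d)].
Qed.

Lemma sqit n {q} : square I q -> square I (it n q).
Proof. move=> h; elim: n => [|n IH] //; rewrite itS; exact: sqF. Qed.

Lemma lohi (q : R * R) : lo q <= q.1 /\ q.1 <= hi q /\ lo q <= q.2 /\ q.2 <= hi q /\
  `|q.1 - q.2| = hi q - lo q.
Proof.
case: (mm q.1 q.2) => [[-> [-> h]]|[-> [-> h]]].
  do 4 (split; first lra).
  by rewrite distrC ger0_norm // subr_ge0.
do 4 (split; first lra).
by rewrite ger0_norm // subr_ge0.
Qed.

Lemma loF {q} : square I q ->
  lo q <= Order.min (M q.1 q.2) (N q.1 q.2) /\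
  Order.max (M q.1 q.2) (N q.1 q.2) <= hi q.
Proof.
case=> h1 h2; have [a b] := HM _ _ h1 h2; have [c d] := HN _ _ h1 h2.
split; [rewrite le_min; apply/andP; split | rewrite ge_max; apply/andP; split] => //.
Qed.

Lemma lo_mono_k {k q} : square I q -> lo q <= lo (it k q) /\ hi (it k q) <= hi q.
Proof.
move=> h; elim: k => [|k [IH1 IH2]]; first by rewrite it0.
rewrite itS; have [a b] := loF (sqit k h).
split; [exact: le_trans IH1 a | exact: le_trans b IH2].
Qed.

Lemma lo_mono {p n m} : square I p -> (n <= m)%N ->
  lo (it n p) <= lo (it m p) /\ hi (it m p) <= hi (it n p).
Proof. move=> h nm; rewrite -(subnK nm) itD; exact: (lo_mono_k (sqit n h)). Qed.

Lemma lo_le_hi p n m : square I p -> lo (it n p) <= hi (it m p).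
Proof.
move=> h; have [a _] := lo_mono h (leq_maxl n m).
have [_ b] := lo_mono h (leq_maxr n m).
have [c [d _]] := lohi (it (maxn n m) p).
lra.
Qed.

Definition Ks p := sup (range (fun n => lo (it n p))).
Definition Bi p := inf (range (fun n => hi (it n p))).

Lemma hasA {p} : square I p -> has_sup (range (fun n => lo (it n p))).
Proof.
move=> h; split; first by exists (lo (it 0 p)); exists 0%N.
by exists (hi (it 0 p)) => x [k _ <-]; exact: lo_le_hi.
Qed.

Lemma hasB {p} : square I p -> has_inf (range (fun n => hi (it n p))).
Proof.
move=> h; split; first by exists (hi (it 0 p)); exists 0%N.
by exists (lo (it 0 p)) => x [k _ <-]; exact: lo_le_hi.
Qed.

Lemma K_bnd {p} : square I p -> forall n, lo (it n p) <= Ks p /\ Ks p <= hi (it n p).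
Proof.
move=> h n; split.
  by apply: (sup_upper_bound (hasA h)); exists n.
apply: ge_sup; first by exists (lo (it 0 p)); exists 0%N.
by move=> x [k _ <-]; exact: lo_le_hi.
Qed.

Lemma B_bnd {p} : square I p -> forall n, lo (it n p) <= Bi p /\ Bi p <= hi (it n p).
Proof.
move=> h n; split.
  apply: lb_le_inf; first by exists (hi (it 0 p)); exists 0%N.
  by move=> x [k _ <-]; exact: lo_le_hi.
by apply: (ge_inf (hasB h).2); exists n.
Qed.

Lemma cont1 {q} : square I q -> forall {e : R}, 0 < e -> exists2 d : R, 0 < d &
  forall t, square I t -> `|t.1 - q.1| < d -> `|t.2 - q.2| < d ->
  `|M t.1 t.2 - M q.1 q.2| < e /\ `|N t.1 t.2 - N q.1 q.2| < e.
Proof.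
move=> hq e e0.
have [d1 d10 H1] := cont_ed cM hq e0.
have [d2 d20 H2] := cont_ed cN hq e0.
exists (Order.min d1 d2); first by rewrite lt_min d10 d20.
move=> t ht; rewrite !lt_min => /andP[a1 a2] /andP[b1 b2].
by split; [exact: H1 | exact: H2].
Qed.

Lemma contit m {q} : square I q -> forall {e : R}, 0 < e -> exists2 d : R, 0 < d &
  forall t, square I t -> `|t.1 - q.1| < d -> `|t.2 - q.2| < d ->
  `|(it m t).1 - (it m q).1| < e /\ `|(it m t).2 - (it m q).2| < e.
Proof.
move=> hq; elim: m => [|m IH] e e0.
  by exists e => // t _ h1 h2; rewrite !it0.
have [d1 d10 H1] := cont1 (sqit m hq) e0.
have [d d0 H2] := IH _ d10.
exists d => // t ht h1 h2.
rewrite !itS; have [a b] := H2 t ht h1 h2.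
exact: H1 (sqit m ht) a b.
Qed.

Lemma shrink {p} : square I p -> forall {eps : R}, 0 < eps ->
  exists n, hi (it n p) - lo (it n p) < eps.
Proof.
move=> hp eps e0.
have hA := hasA hp; have hB := hasB hp.
have Ka := K_bnd hp; have Kb := B_bnd hp.
have ab0 : Ks p <= Bi p.
  apply: lb_le_inf; first by exists (hi (it 0 p)); exists 0%N.
  by move=> x [k _ <-]; case: (Ka k).
case: (ltrP (Ks p) (Bi p)) => [ab|ba]; last first.
  have e2 : 0 < eps / 2 by lra.
  have [x [n1 _ <-] hn1] := sup_adherent e2 hA.
  have [y [n2 _ <-] hn2] := inf_adherent e2 hB.
  exists (maxn n1 n2).
  have [l1 _] := lo_mono hp (leq_maxl n1 n2).
  have [_ h2] := lo_mono hp (leq_maxr n1 n2).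
  rewrite /Ks /Bi in ab0 ba hn1 hn2.
  lra.
exfalso.
set a := Ks p in Ka ab0 ab *; set b := Bi p in Kb ab0 ab *.
have [la ua] := Ka 0%N; have [lb ub] := Kb 0%N.
have Ia : I a := inI hp.1 hp.2 la (le_trans (ltW ab) ub).
have Ib : I b := inI hp.1 hp.2 (le_trans la (ltW ab)) ub.
have s1 : square I (a, b) by split.
have s2 : square I (b, a) by split.
have [m1 [_ hm1]] := wc _ _ Ia Ib (negbT (lt_eqF ab)).
have [m2 [_ hm2]] := wc _ _ Ib Ia (negbT (gt_eqF ab)).
have eab : `|a - b| = b - a by rewrite distrC ger0_norm // subr_ge0 ltW.
have eba : `|b - a| = b - a by rewrite ger0_norm // subr_ge0 ltW.
rewrite eab in hm1; rewrite eba in hm2.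
have g10 : 0 < (b - a - `|(it m1 (a, b)).1 - (it m1 (a, b)).2|) / 2 by lra.
have g20 : 0 < (b - a - `|(it m2 (b, a)).1 - (it m2 (b, a)).2|) / 2 by lra.
have [d1 d10 H1] := contit m1 s1 g10.
have [d2 d20 H2] := contit m2 s2 g20.
have eta0 : 0 < Order.min d1 d2 by rewrite lt_min d10 d20.
have ed1 : Order.min d1 d2 <= d1 by rewrite ge_min lexx.
have ed2 : Order.min d1 d2 <= d2 by rewrite ge_min lexx orbT.
have [x [n1 _ <-] hn1] := sup_adherent eta0 hA.
have [y [n2 _ <-] hn2] := inf_adherent eta0 hB.
rewrite -/(Ks p) -/a in hn1; rewrite -/(Bi p) -/b in hn2.
have [l1 _] := lo_mono hp (leq_maxl n1 n2).
have [_ h2] := lo_mono hp (leq_maxr n1 n2).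
set n := maxn n1 n2 in l1 h2.
have [lan _] := Ka n; have [_ ubn] := Kb n.
have ht := sqit n hp.
have [t1 [t2 [t3 [t4 t5]]]] := lohi (it n p).
have [k1 _] := Ka (m1 + n)%N; have [_ k2] := Kb (m1 + n)%N.
have [_ [_ [_ [_ k3]]]] := lohi (it (m1 + n) p).
have [k4 _] := Ka (m2 + n)%N; have [_ k5] := Kb (m2 + n)%N.
have [_ [_ [_ [_ k6]]]] := lohi (it (m2 + n) p).
case: (mm (it n p).1 (it n p).2) => [[e1 [e2 tle]]|[e1 [e2 tle]]].
  have hx1 : `|(it n p).1 - (a, b).1| < d1 by apply: nltI; rewrite /=; lra.
  have hx2 : `|(it n p).2 - (a, b).2| < d1 by apply: nltI; rewrite /=; lra.
  have [c1 c2] := H1 _ ht hx1 hx2.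
  rewrite -itD in c1 c2.
  have := tri (it (m1 + n) p).1 (it (m1 + n) p).2 (it m1 (a, b)).1 (it m1 (a, b)).2.
  lra.
have hx1 : `|(it n p).1 - (b, a).1| < d2 by apply: nltI; rewrite /=; lra.
have hx2 : `|(it n p).2 - (b, a).2| < d2 by apply: nltI; rewrite /=; lra.
have [c1 c2] := H2 _ ht hx1 hx2.
rewrite -itD in c1 c2.
have := tri (it (m2 + n) p).1 (it (m2 + n) p).2 (it m2 (b, a)).1 (it m2 (b, a)).2.
lra.
Qed.

Lemma shrinkN {p} : square I p -> forall {eps : R}, 0 < eps ->
  exists N0, forall n, (N0 <= n)%N -> hi (it n p) - lo (it n p) < eps.
Proof.
move=> hp eps e0; have [N0 hN] := shrink hp e0.
exists N0 => n hn; have [a b] := lo_mono hp hn; lra.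
Qed.

Lemma main_sec : exists K : R -> R -> R,
    is_mean I K /\ is_invariant I M N K /\
    (forall K' : R -> R -> R, is_mean I K' -> is_invariant I M N K' ->
       forall x y, I x -> I y -> K' x y = K x y) /\
    (forall C : set (R * R), compact C -> C `<=` square I ->
       unif_cvg_on C M N K).
Proof.
exists (fun x y => Ks (x, y)).
split; [|split; [|split]].
- move=> x y hx hy; have hp : square I (x, y) by split.
  have [a b] := K_bnd hp 0%N; split; [exact: a | exact: b].
- move=> x y hx hy; have hp : square I (x, y) by split.
  have hq : square I (M x y, N x y) by have := sqF _ hp.
  apply: eq_close => eps e0.
  have [n hn] := shrink hp e0.
  have E : it n (M x y, N x y) = it n.+1 (x, y) by rewrite /MN_iter iterSr.
  have [a1 a2] := K_bnd hq n; rewrite E in a1 a2.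
  have [b1 b2] := K_bnd hp n.+1.
  have [c1 c2] := lo_mono hp (leqnSn n).
  apply: nltI; lra.
- move=> K' mK' iK' x y hx hy; have hp : square I (x, y) by split.
  apply: eq_close => eps e0.
  have [n hn] := shrink hp e0.
  have E : forall k, K' (it k (x, y)).1 (it k (x, y)).2 = K' x y.
    elim=> [|k IH] //; rewrite itS; have [s1 s2] := sqit k hp.
    by rewrite iK'.
  have [s1 s2] := sqit n hp.
  have [a1 a2] := mK' _ _ s1 s2; rewrite E in a1 a2.
  have [b1 b2] := K_bnd hp n.
  apply: nltI; lra.
- move=> C cC sC eps e0.
  have := @dini_cover R C (fun n y => square I y ->
      `|(it n y).1 - Ks (y.1, y.2)| < eps /\ `|(it n y).2 - Ks (y.1, y.2)| < eps) cC.
  case.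
    move=> x Cx; have hx := sC x Cx.
    have e2 : 0 < eps / 2 by lra.
    have e4 : 0 < eps / 4 by lra.
    have [n0 hn0] := shrink hx e2.
    have [d d0 Hd] := contit n0 hx e4.
    exists n0, d => //; case=> y1 y2 h1 h2 n hn hy.
    set y := (y1, y2) in h1 h2 hy *.
    have [c1 c2] := Hd y hy h1 h2.
    have [_ [_ [_ [_ k1]]]] := lohi (it n0 x).
    have [_ [_ [_ [_ k2]]]] := lohi (it n0 y).
    have := tri (it n0 y).1 (it n0 y).2 (it n0 x).1 (it n0 x).2.
    have [m1 m2] := lo_mono hy hn.
    have [b1 b2] := K_bnd hy n.
    have [t1 [t2 [t3 [t4 _]]]] := lohi (it n y).
    move=> T; split; apply: nltI; lra.
  move=> N0 HN0; exists N0 => n hn p Cp.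
  have := HN0 n hn p Cp (sC p Cp).
  by [].
Qed.

End Main.

Theorem mainTheorem5 (R : realType) (I : set R) (M N : R -> R -> R) :
  is_interval I ->
  is_mean I M -> is_mean I N ->
  continuous_on_square I M -> continuous_on_square I N ->
  weakly_contractive I M N ->
  exists K : R -> R -> R,
    is_mean I K /\ is_invariant I M N K /\
    (forall K' : R -> R -> R, is_mean I K' -> is_invariant I M N K' ->
       forall x y, I x -> I y -> K' x y = K x y) /\
    (forall C : set (R * R), compact C -> C `<=` square I ->
       unif_cvg_on C M N K).
Proof. move=> HI HM HN cM cN wc; exact: main_sec. Qed.
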